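(* Let $x_1,\ldots,x_J \in \mathbb{R}^d$ be given, let $\rho \ge 0$, $\widehat\mu \in \mathbb{R}^d$ and $\widehat\Sigma \in \mathbb{S}_+^d$. Define $\Theta(\{x_j\}) = \{\theta \in \mathbb{R}^d : x_j^\top \theta \ge 0 \ \forall j \in [J]\}$, and let $\mathbb{B}$ be the set of all probability measures $\mathbb{Q}$ on $\mathbb{R}^d$ for which there exists $(\mu,\Sigma) \in \mathbb{R}^d \times \mathbb{S}_+^d$ with $\mathbb{G}((\mu,\Sigma),(\widehat\mu,\widehat\Sigma)) \le \rho$ such that the random vector $\tilde\theta \sim \mathbb{Q}$ has mean $\mu$ and covariance matrix $\Sigma$. Let $U^\star$ be the optimal value of the semidefinite program $$ U^\star = \left\{\begin{array}{cl} \inf & z_0 + \gamma(\rho^2 - \|\widehat\mu\|_2^2 - \mathrm{Tr}(\widehat\Sigma)) + q + \mathrm{Tr}(Q)\\ \text{s.t.} & \gamma \in \mathbb{R}_+,\ z_0 \in \mathbb{R},\ z \in \mathbb{R}^d,\ Z \in \mathbb{S}_+^d,\ q \in \mathbb{R}_+,\ Q \in \mathbb{S}_+^d,\ \lambda \in \mathbb{R}_+^J,\\ & \begin{bmatrix} \gamma I - Z & \gamma\widehat\Sigma^{1/2} \\ \gamma \widehat\Sigma^{1/2} & Q\end{bmatrix} \succeq 0,\quad \begin{bmatrix} \gamma I - Z & \gamma\widehat\mu + z \\ \gamma\widehat\mu^\top + z^\top & q\end{bmatrix} \succeq 0,\\ & \begin{bmatrix} Z & z \\ z^\top & z_0\end{bmatrix}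 \succeq 0,\quad \begin{bmatrix} Z & z \\ z^\top & z_0 - 1\end{bmatrix} \succeq \sum_{j\in[J]} \lambda_j \begin{bmatrix} 0 & \tfrac12 x_j \\ \tfrac12 x_j^\top & 0\end{bmatrix}. \end{array}\right. $$ Then $\sup_{\mathbb{Q}\in\mathbb{B}} \mathbb{Q}(\tilde\theta \in \Theta(\{x_j\})) \le U^\star$.
   Context: $\mathbb{S}^d$ denotes the symmetric $d\times d$ matrices, $\mathbb{S}_+^d$ the positive semidefinite ones, $[J]=\{1,\ldots,J\}$, $I$ the identity matrix. The Gelbrich distance between $(\mu_1,\Sigma_1),(\mu_2,\Sigma_2) \in \mathbb{R}^d\times\mathbb{S}_+^d$ is $$\mathbb{G}((\mu_1,\Sigma_1),(\mu_2,\Sigma_2)) = \sqrt{\|\mu_1-\mu_2\|_2^2 + \mathrm{Tr}\big(\Sigma_1+\Sigma_2 - 2(\Sigma_2^{1/2}\Sigma_1\Sigma_2^{1/2})^{1/2}\big)}.$$ *)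

(* Defs.v *)
From HB Require Import structures.
From mathcomp Require Import all_boot all_order all_algebra.
From mathcomp Require Import all_classical all_reals all_analysis.
Set Implicit Arguments. Unset Strict Implicit. Unset Printing Implicit Defensive.
Import Order.TTheory GRing.Theory Num.Theory.
Local Open Scope classical_set_scope.
Local Open Scope ring_scope.

Section Defs.
Variable R : realType.

Definition psd n (A : 'M[R]_n) : Prop :=
  A^T = A /\ forall v : 'cV[R]_n, 0 <= (v^T *m A *m v) 0 0.

Definition loewner_ge n (A B : 'M[R]_n) : Prop := psd (A - B).

(* principal (PSD) square root: the PSD B with B B = A (unique when A is PSD);
   0 if none exists *)
Definition sqrtm n (A : 'M[R]_n) : 'M[R]_n :=
  xget 0 [set B | psd B /\ B *m B = A].

Definition sqnorm n (v : 'cV[R]_n) : R := \sum_i (v i 0) ^+ 2.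

Definition gelbrich n (m1 : 'cV[R]_n) (S1 : 'M[R]_n) (m2 : 'cV[R]_n) (S2 : 'M[R]_n) : R :=
  Num.sqrt (sqnorm (m1 - m2) +
            \tr (S1 + S2 - 2%:R *: sqrtm (sqrtm S2 *m S1 *m sqrtm S2))).

(* R^d is modelled as d.-tuple R with the product Borel sigma-algebra *)
Definition vec d (t : d.-tuple R) : 'cV[R]_d := \col_i tnth t i.

Definition has_mean_cov d (P : probability (d.-tuple R) R)
    (mu : 'cV[R]_d) (Sigma : 'M[R]_d) : Prop :=
  (forall i : 'I_d,
     P.-integrable setT (fun t => (tnth t i)%:E) /\
     (\int[P]_t (tnth t i)%:E = (mu i 0)%:E)%E) /\
  (forall i j : 'I_d,
     P.-integrable setT (fun t => ((tnth t i - mu i 0) * (tnth t j - mu j 0))%:E) /\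
     (\int[P]_t ((tnth t i - mu i 0) * (tnth t j - mu j 0))%:E = (Sigma i j)%:E)%E).

Definition gelbrich_ball d (rho : R) (muh : 'cV[R]_d) (Sigh : 'M[R]_d)
    : set (probability (d.-tuple R) R) :=
  [set P | exists (mu : 'cV[R]_d) (Sigma : 'M[R]_d),
      psd Sigma /\ gelbrich mu Sigma muh Sigh <= rho /\ has_mean_cov P mu Sigma].

Definition Theta d J (x : 'I_J -> 'cV[R]_d) : set (d.-tuple R) :=
  [set t | forall j : 'I_J, 0 <= ((x j)^T *m vec t) 0 0].

Definition sdp_feasible d J (x : 'I_J -> 'cV[R]_d) (muh : 'cV[R]_d) (Sigh : 'M[R]_d)
    (gamma z0 : R) (z : 'cV[R]_d) (Z : 'M[R]_d) (q : R) (Q : 'M[R]_d)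
    (lambda : 'I_J -> R) : Prop :=
  0 <= gamma /\ psd Z /\ 0 <= q /\ psd Q /\ (forall j, 0 <= lambda j) /\
   psd (block_mx (gamma%:M - Z) (gamma *: sqrtm Sigh)
                 (gamma *: sqrtm Sigh) Q) /\
   psd (block_mx (gamma%:M - Z) (gamma *: muh + z)
                 (gamma *: muh^T + z^T) (q%:M : 'M[R]_1)) /\
   psd (block_mx Z z z^T (z0%:M : 'M[R]_1)) /\
   loewner_ge (block_mx Z z z^T ((z0 - 1)%:M : 'M[R]_1))
     (\sum_(j < J) lambda j *:
        block_mx (0 : 'M[R]_d) ((2%:R)^-1 *: x j)
                 ((2%:R)^-1 *: (x j)^T) (0 : 'M[R]_1)).

Definition sdp_objective d (rho : R) (muh : 'cV[R]_d) (Sigh : 'M[R]_d)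
    (gamma z0 q : R) (Q : 'M[R]_d) : R :=
  z0 + gamma * (rho ^+ 2 - sqnorm muh - \tr Sigh) + q + \tr Q.

(* optimal value U* (in the extended reals; +oo if infeasible) *)
Definition Ustar d J (x : 'I_J -> 'cV[R]_d) (rho : R) (muh : 'cV[R]_d)
    (Sigh : 'M[R]_d) : \bar R :=
  ereal_inf [set r : \bar R | exists (gamma z0 : R) (z : 'cV[R]_d) (Z : 'M[R]_d)
     (q : R) (Q : 'M[R]_d) (lambda : 'I_J -> R),
     sdp_feasible x muh Sigh gamma z0 z Z q Q lambda /\
     r = (sdp_objective rho muh Sigh gamma z0 q Q)%:E].

End Defs.

(* Main.v *)
Require Import Defs.
From HB Require Import structures.
From mathcomp Require Import all_boot all_order all_algebra.
From mathcomp Require Import all_classical all_reals all_analysis.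
From mathcomp Require Import ring lra.
Import Order.TTheory GRing.Theory Num.Theory.
Set Implicit Arguments. Unset Strict Implicit. Unset Printing Implicit Defensive.
Local Open Scope ring_scope.

Definition qf (R : realType) n (A : 'M[R]_n) (v : 'cV[R]_n) : R :=
  (v^T *m A *m v) 0 0.

Lemma tr11 (R : realType) (X : 'M[R]_1) : X^T 0 0 = X 0 0.
Proof. by rewrite mxE. Qed.

Lemma dot_ge0 (R : realType) n (a : 'cV[R]_n) : 0 <= (a^T *m a) 0 0.
Proof.
rewrite mxE; apply: sumr_ge0 => i _; rewrite mxE -expr2; exact: sqr_ge0.
Qed.

Lemma mxE00 (R : realType) m n (A : 'M[R]_(m, n)) (i : 'I_m) (j : 'I_n) :
  A i j = ((row i A) *m col j 1%:M) 0 0.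
Proof.
rewrite mxE (bigD1 j) //= !mxE eqxx mulr1 big1 ?addr0 // => k /negPf kj.
by rewrite !mxE kj mulr0.
Qed.

Lemma tr_quad (R : realType) n m (A : 'M[R]_n) (F : 'M[R]_(n, m)) :
  \tr (F^T *m A *m F) = \sum_i qf A (col i F).
Proof.
rewrite /mxtrace; apply: eq_bigr => i _; rewrite /qf tr_col.
rewrite -row_mul.
rewrite !mxE; apply: eq_bigr => k _; rewrite !mxE; congr (_ * _).
Qed.

Lemma psd_qf (R : realType) n (A : 'M[R]_n) v : psd A -> 0 <= qf A v.
Proof. by case=> _ /(_ v). Qed.

Lemma psd_tr_quad (R : realType) n m (A : 'M[R]_n) (F : 'M[R]_(n, m)) :
  psd A -> 0 <= \tr (F^T *m A *m F).
Proof. by move=> pA; rewrite tr_quad; apply: sumr_ge0 => i _; exact: psd_qf. Qed.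

Definition bil (R : realType) m n (A : 'M[R]_(m, n)) (v : 'cV[R]_m) (w : 'cV[R]_n) : R :=
  (v^T *m A *m w) 0 0.

Lemma qfE (R : realType) n (A : 'M[R]_n) v : qf A v = bil A v v.
Proof. by []. Qed.

Lemma bilDl (R : realType) m n (A : 'M[R]_(m, n)) u v w :
  bil A (u + v) w = bil A u w + bil A v w.
Proof. by rewrite /bil linearD /= !mulmxDl mxE. Qed.

Lemma bilDr (R : realType) m n (A : 'M[R]_(m, n)) u v w :
  bil A w (u + v) = bil A w u + bil A w v.
Proof. by rewrite /bil mulmxDr mxE. Qed.

Lemma bilZl (R : realType) m n (A : 'M[R]_(m, n)) (t : R) v w :
  bil A (t *: v) w = t * bil A v w.
Proof. by rewrite /bil linearZ /= -!scalemxAl mxE. Qed.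

Lemma bilZr (R : realType) m n (A : 'M[R]_(m, n)) (t : R) v w :
  bil A v (t *: w) = t * bil A v w.
Proof. by rewrite /bil -scalemxAr mxE. Qed.

Lemma bilNl (R : realType) m n (A : 'M[R]_(m, n)) v w :
  bil A (- v) w = - bil A v w.
Proof. by rewrite -scaleN1r bilZl mulN1r. Qed.

Lemma bilNr (R : realType) m n (A : 'M[R]_(m, n)) v w :
  bil A v (- w) = - bil A v w.
Proof. by rewrite -scaleN1r bilZr mulN1r. Qed.

Lemma bil_sym (R : realType) n (A : 'M[R]_n) v w :
  A^T = A -> bil A v w = bil A w v.
Proof.
move=> sA; rewrite /bil -tr11 !trmx_mul trmxK sA mulmxA //.
Qed.

Lemma bilMl (R : realType) n (A B : 'M[R]_n) v w :
  bil (A *m B) v w = bil B (A^T *m v) w.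
Proof. by rewrite /bil trmx_mul trmxK !mulmxA. Qed.

Lemma bilMr (R : realType) n (A B : 'M[R]_n) v w :
  bil (A *m B) v w = bil A v (B *m w).
Proof. by rewrite /bil !mulmxA. Qed.

Lemma bil_delta (R : realType) n (A : 'M[R]_n) i j :
  bil A (delta_mx i 0) (delta_mx j 0) = A i j.
Proof.
by rewrite /bil trmx_delta -rowE -colE !mxE.
Qed.

Lemma bilDm (R : realType) m n (A B : 'M[R]_(m, n)) v w :
  bil (A + B) v w = bil A v w + bil B v w.
Proof. by rewrite /bil mulmxDr mulmxDl mxE. Qed.

Lemma bilNm (R : realType) m n (A : 'M[R]_(m, n)) v w :
  bil (- A) v w = - bil A v w.
Proof. by rewrite /bil mulmxN mulNmx mxE. Qed.

Lemma bilZm (R : realType) m n (A : 'M[R]_(m, n)) (t : R) v w :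
  bil (t *: A) v w = t * bil A v w.
Proof. by rewrite /bil -scalemxAr -scalemxAl mxE. Qed.

Lemma bil1 (R : realType) n (v w : 'cV[R]_n) :
  bil 1%:M v w = (v^T *m w) 0 0.
Proof. by rewrite /bil mulmx1. Qed.

Lemma psd_sym (R : realType) n (P : 'M[R]_n) i j : psd P -> P j i = P i j.
Proof. by case=> sP _; rewrite -[in RHS]sP mxE. Qed.

Lemma psd_diag0 (R : realType) n (P : 'M[R]_n) :
  psd P -> (forall i, P i i = 0) -> P = 0.
Proof.
move=> pP d0; apply/matrixP => i j; rewrite mxE.
have := psd_qf (- P i j *: delta_mx i 0 + delta_mx j 0) pP.
rewrite qfE !(bilDl, bilDr, bilZl, bilZr) !bil_delta !d0 (psd_sym i j pP).
move=> h; nra.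
Qed.

Lemma psd_diag_ge0 (R : realType) n (P : 'M[R]_n) i : psd P -> 0 <= P i i.
Proof. by move=> pP; rewrite -bil_delta; exact: psd_qf. Qed.

Lemma tr1x1 (R : realType) (X : 'M[R]_1) : \tr X = X 0 0.
Proof. by rewrite /mxtrace big_ord1. Qed.

Lemma mul1x1 (R : realType) (X Y : 'M[R]_1) : (X *m Y) 0 0 = X 0 0 * Y 0 0.
Proof. by rewrite mxE big_ord1. Qed.

Lemma dotC (R : realType) n (v w : 'cV[R]_n) : (v^T *m w) 0 0 = (w^T *m v) 0 0.
Proof. by rewrite -tr11 trmx_mul trmxK. Qed.

Lemma bil_rank1 (R : realType) n (v w : 'cV[R]_n) :
  bil (v *m v^T) w w = ((v^T *m w) 0 0) ^+ 2.
Proof. by rewrite /bil !mulmxA -(mulmxA (w^T *m v)) mul1x1 dotC expr2. Qed.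

Lemma tr_rank1 (R : realType) n (A : 'M[R]_n) (v : 'cV[R]_n) :
  \tr (A *m (v *m v^T)) = qf A v.
Proof. by rewrite mulmxA mxtrace_mulC tr1x1 /qf mulmxA. Qed.

Lemma tr_psd_mul (R : realType) n (A P : 'M[R]_n) :
  psd A -> psd P -> 0 <= \tr (A *m P).
Proof.
move=> pA.
suff H : forall k (P : 'M[R]_n), psd P -> leq #|[set i | P i i != 0]| k ->
    0 <= \tr (A *m P).
  by move=> pP; apply: (H _ P pP (leqnn _)).
elim=> [|k IH] {}P pP hk.
  have -> : P = 0.
    apply: psd_diag0 => // i; apply/eqP; apply: contraT => hi.
    by move: hk; rewrite leqn0 => /eqP/cards0_eq/setP/(_ i); rewrite !inE hi.
  by rewrite mulmx0 linear0.
case: (pickP (fun i => P i i != 0)) => [i /= Pi | none]; last first.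
  have -> : P = 0.
    by apply: psd_diag0 => // j; apply/eqP; move: (none j) => /= /negbFE.
  by rewrite mulmx0 linear0.
set c := P i i.
have c0 : 0 < c by rewrite lt_def Pi psd_diag_ge0.
set v := col i P.
set P' := P - c^-1 *: (v *m v^T).
have sv : forall w, (v^T *m w) 0 0 = bil P (delta_mx i 0) w.
  move=> w; rewrite /v colE /bil trmx_mul.
  by case: pP => -> _.
have pP' : psd P'.
  split.
    by rewrite /P' linearB /= linearZ /= trmx_mul trmxK; case: pP => -> _.
  move=> w; rewrite -/(qf _ _) qfE /P' bilDm bilNm bilZm bil_rank1 sv.
  set s := bil P (delta_mx i 0) w.
  have := psd_qf (w + (- s / c) *: delta_mx i 0) pP.
  rewrite qfE !(bilDl, bilDr, bilZl, bilZr) -/s bil_delta -/c.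
  have -> : bil P w (delta_mx i 0) = s by rewrite bil_sym //; case: pP.
  have -> : bil P w w + (- s / c) * s + ((- s / c) * s + (- s / c) * ((- s / c) * c))
     = bil P w w - c^-1 * s ^+ 2.
    by field; rewrite gt_eqF.
  by [].
have P'jj : forall j, P' j j = P j j - c^-1 * (P j i) ^+ 2.
  by move=> j; rewrite /P' !mxE big_ord1 !mxE expr2.
have hk' : leq #|[set j | P' j j != 0]| k.
  rewrite -ltnS; apply: leq_trans hk; apply: proper_card.
  apply/properP; split.
    apply/fintype.subsetP => j; rewrite !inE; apply: contraNN => /eqP Pj.
    apply/eqP/le_anti; rewrite psd_diag_ge0 // andbT P'jj Pj sub0r oppr_le0.
    by rewrite mulr_ge0 ?sqr_ge0 // invr_ge0 ltW.
  exists i; first by rewrite inE.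
  rewrite inE P'jj negbK -/c expr2 mulrA mulVf ?mul1r ?subrr // gt_eqF //.
have -> : P = P' + c^-1 *: (v *m v^T) by rewrite /P' subrK.
rewrite mulmxDr mxtraceD -scalemxAr mxtraceZ tr_rank1.
apply: addr_ge0; first exact: IH.
by apply: mulr_ge0; [rewrite invr_ge0 ltW | exact: psd_qf].
Qed.

Lemma bil0r (R : realType) m n (A : 'M[R]_(m, n)) v : bil A v 0 = 0.
Proof. by rewrite /bil mulmx0 mxE. Qed.

Lemma bil0l (R : realType) m n (A : 'M[R]_(m, n)) w : bil A 0 w = 0.
Proof. by rewrite /bil linear0 !mul0mx mxE. Qed.

Lemma quad_block (R : realType) n1 n2 p (A : 'M[R]_n1) (B : 'M[R]_(n1, n2))
   (C : 'M[R]_(n2, n1)) (D : 'M[R]_n2) (K : 'M[R]_(n1, p)) (L : 'M[R]_(n2, p)) :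
  (col_mx K L)^T *m block_mx A B C D *m col_mx K L =
  K^T *m A *m K + L^T *m C *m K + K^T *m B *m L + L^T *m D *m L.
Proof.
rewrite tr_col_mx mul_row_block mul_row_col !mulmxDl ?mulmxA.
by rewrite addrA.
Qed.

Lemma bil_block (R : realType) n1 n2 (A : 'M[R]_n1) (B : 'M[R]_(n1, n2))
   (C : 'M[R]_(n2, n1)) (D : 'M[R]_n2) v1 v2 w1 w2 :
  bil (block_mx A B C D) (col_mx v1 v2) (col_mx w1 w2) =
  bil A v1 w1 + bil B v1 w2 + bil C v2 w1 + bil D v2 w2.
Proof.
rewrite /bil tr_col_mx mul_row_block mul_row_col !mulmxDl ?mulmxA !mxE.
lra.
Qed.

Lemma psd_block_ul (R : realType) n1 n2 (A : 'M[R]_n1) (B : 'M[R]_(n1, n2))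
   (C : 'M[R]_(n2, n1)) (D : 'M[R]_n2) :
  psd (block_mx A B C D) -> psd A.
Proof.
case=> sM pM; split.
  by move: sM; rewrite tr_block_mx => /eq_block_mx [].
move=> v; have := pM (col_mx v 0); rewrite -/(qf _ _) qfE bil_block.
by rewrite !bil0r !bil0l !addr0.
Qed.

Lemma psd_block_dr (R : realType) n1 n2 (A : 'M[R]_n1) (B : 'M[R]_(n1, n2))
   (C : 'M[R]_(n2, n1)) (D : 'M[R]_n2) :
  psd (block_mx A B C D) -> psd D.
Proof.
case=> sM pM; split.
  by move: sM; rewrite tr_block_mx => /eq_block_mx [].
move=> v; have := pM (col_mx 0 v); rewrite -/(qf _ _) qfE bil_block.
by rewrite !bil0r !bil0l !add0r.
Qed.

Lemma psd_tr_ge0 (R : realType) n (A : 'M[R]_n) : psd A -> 0 <= \tr A.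
Proof. by move=> pA; apply: sumr_ge0 => i _; exact: psd_diag_ge0. Qed.

Lemma dot_eq0 (R : realType) n (w : 'cV[R]_n) : (w^T *m w) 0 0 = 0 -> w = 0.
Proof.
rewrite mxE => /eqP; rewrite psumr_eq0 => [/allP h|i _]; last first.
  by rewrite !mxE -expr2 sqr_ge0.
apply/matrixP => i j; rewrite (ord1 j) !mxE.
have := h i (mem_index_enum _); rewrite !mxE -expr2 sqrf_eq0 => /eqP //.
Qed.

Lemma dot_bil (R : realType) n (a b : 'cV[R]_n) : (a^T *m b) 0 0 = bil 1%:M a b.
Proof. by rewrite bil1. Qed.

Lemma psd_shift (R : realType) n (T : 'M[R]_n) (e : R) :
  0 <= e -> psd T -> psd (T + e%:M).
Proof.
move=> e0 [sT pT]; split.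
  by rewrite linearD /= sT tr_scalar_mx.
move=> w; rewrite -/(qf _ _) qfE bilDm -scalemx1 bilZm -dot_bil.
by apply: addr_ge0; [exact: pT | apply: mulr_ge0 => //; exact: dot_ge0].
Qed.

Lemma shift_unit (R : realType) n (T : 'M[R]_n) (e : R) :
  0 < e -> psd T -> T + e%:M \in unitmx.
Proof.
move=> e0 pT; rewrite unitmxE unitfE; apply/negP => /det0P [v v0 hv].
have h : qf (T + e%:M) v^T = 0 by rewrite /qf trmxK hv mul0mx mxE.
move: h; rewrite qfE bilDm -scalemx1 bilZm -dot_bil => h.
have h1 : 0 <= bil T v^T v^T by exact: psd_qf.
have h2 := dot_ge0 v^T.
have h3 : ((v^T)^T *m v^T) 0 0 = 0 by nra.
by move/eqP: v0; apply; rewrite -[v]trmxK (dot_eq0 h3) linear0.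
Qed.

Lemma key_eps (R : realType) n (A Q S Sig T : 'M[R]_n) (g e : R) :
  0 <= g -> 0 < e -> psd (block_mx A (g *: S) (g *: S) Q) -> S^T = S ->
  psd Sig -> psd T -> T *m T = S *m Sig *m S ->
  2 * g * (\tr T - e * n%:R) <= \tr (A *m Sig) + \tr Q.
Proof.
move=> g0 e0 pM sS pSig pT TT.
have pA := psd_block_ul pM.
have sT : T^T = T by case: pT.
have sSig : Sig^T = Sig by case: pSig.
set Te := T + e%:M.
have pTe : psd Te by apply: psd_shift => //; exact: ltW.
have sTe : Te^T = Te by case: pTe.
have uTe : Te \in unitmx by exact: shift_unit.
set Y := invmx Te.
have TeY : Te *m Y = 1%:M by exact: mulmxV.
have YTe : Y *m Te = 1%:M by exact: mulVmx.
have sY : Y^T = Y by rewrite /Y trmx_inv sTe.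
have TTe : T *m Te = Te *m T.
  by rewrite /Te mulmxDr mulmxDl mul_mx_scalar mul_scalar_mx.
have TY : T *m Y = Y *m T.
  rewrite -{1}[T]mul1mx -YTe -!mulmxA (mulmxA Te) -TTe -mulmxA TeY mulmx1.
  by [].
have IY : T *m Y = 1%:M - e *: Y.
  by rewrite -TeY /Te mulmxDl mul_scalar_mx addrK.
have pY : psd Y.
  split => // v; rewrite -/(qf _ _) qfE.
  have -> : bil Y v v = bil (Y *m Te *m Y) v v by rewrite YTe mul1mx.
  by rewrite bilMr bilMl sY; exact: psd_qf.
have trY := psd_tr_ge0 pY.
have trbound : \tr T - e * n%:R <= \tr (T *m T *m Y).
  have -> : \tr (T *m T *m Y) = \tr T - e * \tr (T *m Y).
    by rewrite -mulmxA [in LHS]IY mulmxBr mulmx1 -scalemxAr linearB /= mxtraceZ.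
  rewrite IY linearB /= mxtraceZ mxtrace1.
  have : 0 <= e * (e * \tr Y) by rewrite !mulr_ge0 // ltW.
  lra.
set K := Sig *m S *m Y.
have KT : K^T = Y *m S *m Sig by rewrite /K !trmx_mul sY sS sSig mulmxA.
have pD : psd (Sig - K *m K^T).
  split.
    by rewrite linearB /= trmx_mul trmxK sSig.
  move=> v; rewrite -/(qf _ _) qfE bilDm bilNm.
  set u := K^T *m v.
  have uT : u^T = v^T *m K by rewrite /u trmx_mul trmxK.
  have h1 : bil (K *m K^T) v v = (u^T *m u) 0 0.
    by rewrite /bil uT !mulmxA.
  set a := S *m Y *m u.
  have h2 : bil Sig v a = (u^T *m u) 0 0.
    by rewrite /bil uT /a /K !mulmxA.
  have h3 : bil Sig a a = ((T *m Y *m u)^T *m (T *m Y *m u)) 0 0.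
    rewrite /bil /a !trmx_mul sY sS sT !mulmxA; congr (_ 0 0); congr (_ *m _).
    rewrite -!mulmxA; congr (_ *m _); rewrite !mulmxA; congr (_ *m _).
    by rewrite -(mulmxA _ T T) TT !mulmxA.
  have h4 : 0 <= qf Sig (v - a) by exact: psd_qf.
  rewrite qfE bilDl !bilDr !bilNl !bilNr (bil_sym a v) // h2 h3 in h4.
  set r := Y *m u.
  have ur : u = T *m r + e *: r by rewrite /r -mul_scalar_mx -mulmxDl mulmxA TeY mul1mx.
  have h5 : ((T *m Y *m u)^T *m (T *m Y *m u)) 0 0 <= (u^T *m u) 0 0.
    rewrite -mulmxA -/r.
    rewrite [X in _ <= X]dot_bil {1 2}ur !(bilDl, bilDr, bilZl, bilZr) -!dot_bil.
    have -> : ((T *m r)^T *m r) 0 0 = qf T r by rewrite /qf trmx_mul sT mulmxA.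
    have -> : (r^T *m (T *m r)) 0 0 = qf T r by rewrite /qf mulmxA.
    have q0 : 0 <= qf T r by exact: psd_qf.
    have d0 := dot_ge0 r.
    have : 0 <= e * qf T r by rewrite mulr_ge0 // ltW.
    have : 0 <= e * (e * (r^T *m r) 0 0) by rewrite !mulr_ge0 // ltW.
    lra.
  rewrite h1; lra.
have main : 0 <= \tr ((col_mx K (- 1%:M))^T *m block_mx A (g *: S) (g *: S) Q *m col_mx K (- 1%:M)).
  exact: psd_tr_quad.
rewrite quad_block !linearD /= in main.
have N1 : (- 1%:M : 'M[R]_n)^T = - 1%:M by rewrite linearN /= trmx1.
have t1 : \tr (K^T *m A *m K) <= \tr (A *m Sig).
  rewrite -mulmxA mxtrace_mulC -mulmxA.
  have := tr_psd_mul pA pD; rewrite mulmxBr linearB /=; lra.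
have tSK : \tr (S *m K) = \tr (T *m T *m Y) by rewrite TT /K !mulmxA.
have t2 : \tr ((- 1%:M)^T *m (g *: S) *m K) = - (g * \tr (T *m T *m Y)).
  by rewrite N1 mulNmx mul1mx mulNmx -scalemxAl linearN /= mxtraceZ tSK.
have t3 : \tr (K^T *m (g *: S) *m - 1%:M) = - (g * \tr (T *m T *m Y)).
  rewrite mulmxN mulmx1 -scalemxAr linearN /= mxtraceZ -tSK -mxtrace_tr.
  by rewrite trmx_mul trmxK sS.
have t4 : \tr ((- 1%:M)^T *m Q *m - 1%:M) = \tr Q.
  by rewrite N1 mulNmx mul1mx mulmxN mulmx1 opprK.
rewrite t2 t3 t4 in main.
have : g * (\tr T - e * n%:R) <= g * \tr (T *m T *m Y) by rewrite ler_wpM2l.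
lra.
Qed.

Lemma sqrtm_sym (R : realType) n (A : 'M[R]_n) : (sqrtm A)^T = sqrtm A.
Proof. by rewrite /sqrtm; case: xgetP => [B _ [[]] | _] //; rewrite trmx0. Qed.

Lemma key_final (R : realType) n (A Q Sigh Sig : 'M[R]_n) (g : R) :
  0 <= g -> psd (block_mx A (g *: sqrtm Sigh) (g *: sqrtm Sigh) Q) -> psd Sig ->
  2 * g * \tr (sqrtm (sqrtm Sigh *m Sig *m sqrtm Sigh)) <= \tr (A *m Sig) + \tr Q.
Proof.
move=> g0 pM pSig.
have pA := psd_block_ul pM.
have pQ := psd_block_dr pM.
have sS := sqrtm_sym Sigh.
move: pM sS; set S := sqrtm Sigh => pM sS.
rewrite {1}/sqrtm; case: xgetP => [T _ [pT TT] | _]; last first.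
  rewrite linear0 mulr0.
  by apply: addr_ge0; [exact: tr_psd_mul | exact: psd_tr_ge0].
apply/ler_addgt0Pr => e e0.
set eps := e / (2 * g * n%:R + 1).
have den0 : 0 < 2 * g * n%:R + 1.
  have : 0 <= 2 * g * n%:R by rewrite !mulr_ge0 // ler0n.
  lra.
have eps0 : 0 < eps by rewrite divr_gt0.
have heps : eps * (2 * g * n%:R + 1) = e by rewrite /eps mulfVK // gt_eqF.
have := key_eps g0 eps0 pM sS pSig pT TT.
have : 0 <= eps by exact: ltW.
nra.
Qed.

Lemma sqnormE (R : realType) n (v : 'cV[R]_n) : sqnorm v = (v^T *m v) 0 0.
Proof. by rewrite /sqnorm mxE; apply: eq_bigr => i _; rewrite mxE expr2. Qed.

Lemma sqrt_le_sq (R : realType) (x r : R) : Num.sqrt x <= r -> x <= r ^+ 2.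
Proof.
move=> h; have [x0|x0] := leP 0 x.
  have s0 := sqrtr_ge0 x; have := sqr_sqrtr x0; nra.
have := sqr_ge0 r; lra.
Qed.

Lemma bil11 (R : realType) n (B : 'M[R]_(n, 1)) v :
  bil B v 1%:M = (v^T *m B) 0 0.
Proof. by rewrite /bil mulmx1. Qed.

Lemma bil11l (R : realType) n (B : 'M[R]_(1, n)) v :
  bil B 1%:M v = (B *m v) 0 0.
Proof. by rewrite /bil trmx1 mul1mx. Qed.

Lemma alg_bound (R : realType) d (muh mu : 'cV[R]_d) (Sigh Sig Z Q : 'M[R]_d)
    (z : 'cV[R]_d) (rho g z0 q : R) :
  0 <= g -> psd Sig -> gelbrich mu Sig muh Sigh <= rho ->
  psd (block_mx (g%:M - Z) (g *: sqrtm Sigh) (g *: sqrtm Sigh) Q) ->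
  psd (block_mx (g%:M - Z) (g *: muh + z) (g *: muh^T + z^T) (q%:M : 'M[R]_1)) ->
  \tr (Z *m Sig) + qf Z mu + 2 * (z^T *m mu) 0 0 + z0 <=
    sdp_objective rho muh Sigh g z0 q Q.
Proof.
move=> g0 pSig hG B1 B2.
have K := key_final g0 B1 pSig.
have hG2 := sqrt_le_sq hG.
have H2 := psd_qf (col_mx (- mu) (1%:M : 'cV[R]_1)) B2.
rewrite /qf -/(bil _ _ _) bil_block bil11 bil11l in H2.
have e1 : bil (g%:M - Z) (- mu) (- mu) = g * (mu^T *m mu) 0 0 - qf Z mu.
  by rewrite bilNl bilNr opprK bilDm bilNm -scalemx1 bilZm bil1.
have e2 : ((- mu)^T *m (g *: muh + z)) 0 0 = - (g * (muh^T *m mu) 0 0 + (z^T *m mu) 0 0).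
  by rewrite [LHS]dot_bil bilNl bilDr bilZr -!dot_bil (dotC mu muh) (dotC mu z).
have e3 : ((g *: muh^T + z^T) *m - mu) 0 0 = - (g * (muh^T *m mu) 0 0 + (z^T *m mu) 0 0).
  rewrite -linearZ -linearD /= [LHS]dot_bil bilNr bilDl bilZl -!dot_bil //.
have e4 : bil (q%:M : 'M[R]_1) 1%:M 1%:M = q.
  by rewrite /bil trmx1 mul1mx mulmx1 mxE.
rewrite e1 e2 e3 e4 in H2.
rewrite /sdp_objective; move: hG2 K H2.
rewrite /gelbrich sqnormE dot_bil bilDl !bilDr !bilNl !bilNr -!dot_bil (dotC mu muh).
rewrite !linearB /= !linearD /= mxtraceZ.
rewrite mulmxBl mul_scalar_mx linearB /= mxtraceZ.
rewrite sqnormE.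
set T := \tr (sqrtm _).
move=> h1 h2 h3.
have : 0 <= g * (rho ^+ 2 - ((mu^T *m mu) 0 0 - (muh^T *m mu) 0 0 - ((muh^T *m mu) 0 0 - (muh^T *m muh) 0 0) + (\tr Sig + \tr Sigh - 2%:R * T))).
  by apply: mulr_ge0 => //; lra.
lra.
Qed.

Local Open Scope classical_set_scope.
Local Open Scope ring_scope.

Lemma vecE (R : realType) d (t : d.-tuple R) i : vec t i 0 = tnth t i.
Proof. by rewrite mxE. Qed.

Lemma measurable_lin (R : realType) d (a : 'cV[R]_d) :
  measurable_fun [set: d.-tuple R] (fun t : d.-tuple R => (a^T *m vec t) 0 0).
Proof.
rewrite (_ : (fun t => _) = (fun t => \sum_(i <- index_enum 'I_d) (a i 0 * tnth t i))); last first.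
  by apply/funext => t; rewrite mxE; apply: eq_bigr => i _; rewrite !mxE.
apply: measurable_sum => i.
apply: measurable_realfun.measurable_funM; first exact: measurable_cst.
exact: measurable_tnth.
Qed.

Lemma measurable_Theta (R : realType) d J (x : 'I_J -> 'cV[R]_d) :
  measurable (Theta x).
Proof.
rewrite (_ : Theta x = \bigcap_(j in [set: 'I_J])
    ((fun t : d.-tuple R => ((x j)^T *m vec t) 0 0) @^-1` `[0, +oo[)); last first.
  apply/seteqP; split => t /=.
    by move=> h j _ /=; rewrite in_itv /= andbT; exact: h.
  by move=> h j; have := h j I; rewrite /= in_itv /= andbT.
apply: fin_bigcap_measurable; first exact: finite_finset.
move=> j _; rewrite -[X in measurable X]setTI.
exact: measurable_lin.
Qed.

Lemma bil_sum (R : realType) m n J (F : 'I_J -> 'M[R]_(m, n)) v w :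
  bil (\sum_(j < J) F j) v w = \sum_(j < J) bil (F j) v w.
Proof.
apply: (big_morph (fun A => bil A v w)) => [A B|]; first exact: bilDm.
by rewrite /bil mulmx0 mul0mx mxE.
Qed.

Lemma mxZE (R : realType) m n (a : R) (A : 'M[R]_(m, n)) i j :
  (a *: A) i j = a * A i j.
Proof. by rewrite mxE. Qed.

Lemma bil0m (R : realType) m n (v : 'cV[R]_m) (w : 'cV[R]_n) : bil 0 v w = 0.
Proof. by rewrite /bil mulmx0 mul0mx mxE. Qed.

Lemma pointwise (R : realType) d J (x : 'I_J -> 'cV[R]_d) (z0 : R) (z : 'cV[R]_d)
    (Z : 'M[R]_d) (lam : 'I_J -> R) :
  psd (block_mx Z z z^T (z0%:M : 'M[R]_1)) ->
  loewner_ge (block_mx Z z z^T ((z0 - 1)%:M : 'M[R]_1))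
     (\sum_(j < J) lam j *:
        block_mx (0 : 'M[R]_d) ((2%:R)^-1 *: x j)
                 ((2%:R)^-1 *: (x j)^T) (0 : 'M[R]_1)) ->
  (forall j, 0 <= lam j) ->
  forall v : 'cV[R]_d, 0 <= qf Z v + 2 * (z^T *m v) 0 0 + z0 /\
     ((forall j, 0 <= ((x j)^T *m v) 0 0) -> 1 <= qf Z v + 2 * (z^T *m v) 0 0 + z0).
Proof.
move=> B3 B4 lam0 v.
have eM : forall c : R, bil (block_mx Z z z^T (c%:M : 'M[R]_1)) (col_mx v 1%:M) (col_mx v 1%:M)
    = qf Z v + 2 * (z^T *m v) 0 0 + c.
  move=> c; rewrite bil_block bil11 bil11l (dotC v z) -qfE.
  have -> : bil (c%:M : 'M[R]_1) 1%:M 1%:M = c by rewrite /bil trmx1 mul1mx mulmx1 mxE eqxx mulr1n.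
  lra.
split.
  by have := psd_qf (col_mx v 1%:M) B3; rewrite /qf -/(bil _ _ _) eM.
move=> hx.
have := psd_qf (col_mx v 1%:M) B4; rewrite /qf -/(bil _ _ _) bilDm bilNm eM bil_sum.
have hj : forall j, bil (lam j *: block_mx (0 : 'M[R]_d) ((2%:R)^-1 *: x j)
                 ((2%:R)^-1 *: (x j)^T) (0 : 'M[R]_1)) (col_mx v 1%:M) (col_mx v 1%:M)
   = lam j * ((x j)^T *m v) 0 0.
  move=> j; rewrite bilZm bil_block !bil0m bil11 bil11l -!scalemxAl -!scalemxAr !mxZE.
  rewrite (dotC v (x j)); lra.
rewrite (eq_bigr _ (fun j _ => hj j)).
have : 0 <= \sum_(j < J) lam j * ((x j)^T *m v) 0 0.
  by apply: sumr_ge0 => j _; apply: mulr_ge0.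
rewrite -/(qf Z v); lra.
Qed.

Lemma bil_entries (R : realType) m n (A : 'M[R]_(m, n)) v w :
  bil A v w = \sum_i \sum_j v i 0 * A i j * w j 0.
Proof.
rewrite /bil mxE exchange_big /=; apply: eq_bigr => j _; rewrite mxE big_distrl /=.
by apply: eq_bigr => i _; rewrite !mxE.
Qed.

Lemma dot_entries (R : realType) n (a b : 'cV[R]_n) :
  (a^T *m b) 0 0 = \sum_i a i 0 * b i 0.
Proof. by rewrite mxE; apply: eq_bigr => i _; rewrite mxE. Qed.

Definition lincoef (R : realType) d (Z : 'M[R]_d) (mu z : 'cV[R]_d) (j : 'I_d) : R :=
  \sum_i mu i 0 * Z i j + \sum_i Z j i * mu i 0 + 2 * z j 0.

Lemma f_decomp (R : realType) d (Z : 'M[R]_d) (mu z w : 'cV[R]_d) (z0 : R) :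
  qf Z (mu + w) + 2 * (z^T *m (mu + w)) 0 0 + z0 =
  \sum_i \sum_j Z i j * (w i 0 * w j 0) + \sum_j lincoef Z mu z j * w j 0 +
  (qf Z mu + 2 * (z^T *m mu) 0 0 + z0).
Proof.
rewrite !qfE !bilDl !bilDr mulmxDr mxE.
have -> : bil Z w w = \sum_i \sum_j Z i j * (w i 0 * w j 0).
  rewrite bil_entries; apply: eq_bigr => i _; apply: eq_bigr => j _; ring.
have -> : \sum_j lincoef Z mu z j * w j 0 = bil Z mu w + bil Z w mu + 2 * (z^T *m w) 0 0.
  have h1 : \sum_j (\sum_i mu i 0 * Z i j) * w j 0 = bil Z mu w.
    rewrite bil_entries exchange_big /=; apply: eq_bigr => j _.
    by rewrite mulr_suml.
  have h2 : \sum_j (\sum_i Z j i * mu i 0) * w j 0 = bil Z w mu.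
    rewrite bil_entries; apply: eq_bigr => j _; rewrite mulr_suml.
    by apply: eq_bigr => i _; ring.
  have h3 : \sum_j (2 * z j 0) * w j 0 = 2 * (z^T *m w) 0 0.
    by rewrite dot_entries mulr_sumr; apply: eq_bigr => j _; ring.
  rewrite /lincoef.
  under eq_bigr do rewrite mulrDl mulrDl.
  by rewrite !big_split /= h1 h2 h3.
ring.
Qed.

Lemma prob_bound (R : realType) d J (x : 'I_J -> 'cV[R]_d)
    (P : probability (d.-tuple R) R) (mu : 'cV[R]_d) (Sig : 'M[R]_d)
    (z0 : R) (z : 'cV[R]_d) (Z : 'M[R]_d) (lam : 'I_J -> R) :
  has_mean_cov P mu Sig -> psd Sig ->
  psd (block_mx Z z z^T (z0%:M : 'M[R]_1)) ->
  loewner_ge (block_mx Z z z^T ((z0 - 1)%:M : 'M[R]_1))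
     (\sum_(j < J) lam j *:
        block_mx (0 : 'M[R]_d) ((2%:R)^-1 *: x j)
                 ((2%:R)^-1 *: (x j)^T) (0 : 'M[R]_1)) ->
  (forall j, 0 <= lam j) ->
  (P (Theta x) <= (\tr (Z *m Sig) + qf Z mu + 2 * (z^T *m mu) 0 0 + z0)%:E)%E.
Proof.
move=> [hm hc] pSig B3 B4 lam0.
pose u := fun i (t : d.-tuple R) => tnth t i - mu i 0.
pose K := qf Z mu + 2 * (z^T *m mu) 0 0 + z0.
pose fA := fun t => (\sum_i \sum_j (Z i j)%:E * ((u i t * u j t)%R)%:E)%E.
pose fB := fun t => (\sum_j (lincoef Z mu z j)%:E * (u j t)%:E)%E.
pose F := fun t => (fA t + fB t + K%:E)%E.
have hF : forall t, F t = (qf Z (vec t) + 2 * (z^T *m vec t) 0 0 + z0)%:E.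
  move=> t; have := f_decomp Z mu z (vec t - mu) z0.
  rewrite [mu + _]addrC subrK => ->.
  rewrite /F /fA /fB !EFinD; congr (_ + _ + _)%E.
    rewrite -sumEFin; apply: eq_bigr => i _; rewrite -sumEFin; apply: eq_bigr => j _.
    by rewrite -EFinM /u !mxE.
  rewrite -sumEFin; apply: eq_bigr => j _.
  by rewrite -EFinM /u !mxE.
have eu : forall i, (fun t => (u i t)%:E) = ((fun t => (tnth t i)%:E) \- (EFin \o cst (mu i ord0)))%E.
  by move=> i; apply/funext => t; rewrite /u EFinB.
have iu : forall i, P.-integrable setT (fun t => (u i t)%:E).
  move=> i; rewrite eu; apply: integrableB => //; first exact: (hm i).1.
  exact: finite_measure_integrable_cst.
have intu : forall i, (\int[P]_t (u i t)%:E = 0)%E.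
  move=> i; rewrite eu integralB //; first last.
  - exact: finite_measure_integrable_cst.
  - exact: (hm i).1.
  rewrite (hm i).2.
  have -> : (\int[P]_t (EFin \o cst (mu i ord0)) t = (mu i ord0)%:E)%E.
    rewrite (_ : EFin \o _ = cst (mu i ord0)%:E) // integral_cst //.
    by rewrite -[RHS]mule1; congr (_ * _)%E; exact: probability_setT.
  by rewrite subee.
have iuu : forall i j, P.-integrable setT (fun t => ((u i t * u j t)%R)%:E).
  by move=> i j; exact: (hc i j).1.
have intuu : forall i j, (\int[P]_t ((u i t * u j t)%R)%:E = (Sig i j)%:E)%E.
  by move=> i j; exact: (hc i j).2.
have iA : P.-integrable setT fA.
  apply: (integrable_sum measurableT) => i _; apply: (integrable_sum measurableT) => j _.
  exact: (integrableZl measurableT).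
have iB : P.-integrable setT fB.
  apply: (integrable_sum measurableT) => j _; exact: (integrableZl measurableT).
have iC : P.-integrable setT (fun _ => K%:E).
  exact: (finite_measure_integrable_cst _ K).
have intA : (\int[P]_t fA t = (\sum_i \sum_j Z i j * Sig i j)%:E)%E.
  rewrite integral_sum //; last first.
    by move=> i; apply: (integrable_sum measurableT) => j _; exact: (integrableZl measurableT).
  rewrite -sumEFin; apply: eq_bigr => i _.
  rewrite integral_sum //; last by move=> j; exact: (integrableZl measurableT).
  rewrite -sumEFin; apply: eq_bigr => j _.
  by rewrite integralZl // intuu.
have intB : (\int[P]_t fB t = 0)%E.
  rewrite integral_sum //; last by move=> j; exact: (integrableZl measurableT).
  by apply: big1 => j _; rewrite integralZl // intu mule0.
have intC : (\int[P]_t (K%:E) = K%:E)%E.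
  by rewrite integral_cst // -[RHS]mule1; congr (_ * _)%E; exact: probability_setT.
have intF : (\int[P]_t F t = (\tr (Z *m Sig) + K)%:E)%E.
  rewrite /F integralD //; last exact: integrableD.
  rewrite integralD // intA intB intC adde0 -EFinD; congr (_ + _)%:E.
  rewrite /mxtrace; apply: eq_bigr => i _; rewrite mxE; apply: eq_bigr => j _.
  by rewrite (psd_sym i j pSig).
have mT := measurable_Theta x.
have -> : P (Theta x) = (\int[P]_t (\1_(Theta x) t)%:E)%E.
  by rewrite integral_indic // setIT.
have -> : \tr (Z *m Sig) + qf Z mu + 2 * (z^T *m mu) 0 0 + z0 = \tr (Z *m Sig) + K by rewrite /K !addrA.
rewrite -intF.
apply: le_integral => //.
- exact: integrable_indic.
- by rewrite /F; apply: integrableD => //; exact: integrableD.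
move=> t _; rewrite hF lee_fin indicE.
have [h0 h1] := pointwise B3 B4 lam0 (vec t).
case: (boolP (t \in Theta x)) => [/set_mem ht|_] /=; last exact: h0.
exact: h1.
Qed.

Unset Implicit Arguments.
Local Open Scope classical_set_scope.
Local Open Scope ring_scope.

Theorem theorem2 (R : realType) (d J : nat) (x : 'I_J -> 'cV[R]_d) (rho : R)
    (muh : 'cV[R]_d) (Sigh : 'M[R]_d) :
  0 <= rho -> psd Sigh ->
  (ereal_sup [set P (Theta x) | P in gelbrich_ball rho muh Sigh] <=
   Ustar x rho muh Sigh)%E.
Proof.
move=> rho0 pSigh.
apply/ereal_supP => _ [P [mu [Sig [pSig [hG hmc]]]] <-].
apply/ereal_infP => _ [g [z0 [z [Z [q [Q [lam [feas ->]]]]]]]].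
case: feas => [g0 [pZ [q0 [pQ [lam0 [B1 [B2 [B3 B4]]]]]]]].
apply: le_trans (prob_bound hmc pSig B3 B4 lam0) _.
rewrite lee_fin; exact: alg_bound.
Qed.
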